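(* Let $X=\omega\times\omega$, and let $I$ and $J$ be the ideals on $X$ defined below. Then $\mathscr C_J$ covers $\mathscr C_I$ in the lattice of clones on $X$: we have $\mathscr C_I\subsetneq \mathscr C_J$, and there is no clone $\mathscr D$ on $X$ with $\mathscr C_I\subsetneq\mathscr D\subsetneq\mathscr C_J$. Equivalently, for every $f\in\mathscr C_J\setminus\mathscr C_I$, the clone generated by $\{f\}\cup\mathscr C_I$ equals $\mathscr C_J$.
   Context: A clone on a set $X$ is a set of finitary operations on $X$ containing all projections $\pi^n_k(x_1,\dots,x_n)=x_k$ and closed under composition; clones ordered by inclusion form a lattice. Write elements of $X=\omega\times\omega$ as $(a|b)$, with $a$ the $x$-coordinate and $b$ the $y$-coordinate. Sets of the form $\omega\times\{n\}$ are called lines. The width of $Y\subseteq X$ is $\sup\{|Y\cap(\omega\times\{n\})|:n\in\omega\}$. $I$ is the ideal of all subsets of $X$ of finite width; $J$ is the ideal of all subsets of $X$ whose intersection with every line is finite. For an ideal $K$ on $X$, $\mathscr C_K$ is the set of all finitary operations $f:X^n\to X$ ($n\ge1$) such that $f[A^n]\in K$ for all $A\in K$. *)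

(* Defs.v *)
From mathcomp Require Import all_boot.
From Stdlib Require Import List.
Set Implicit Arguments. Unset Strict Implicit. Unset Printing Implicit Defensive.

(* The base set X = omega x omega; (a, b) stands for (a|b):
   a is the x-coordinate, b the y-coordinate.  Line n = omega x {n}. *)
Definition X : Type := (nat * nat)%type.

Definition subset := X -> Prop.

(* A finitary operation of arity n+1 >= 1 : X^(n+1) -> X.
   The arity shift encodes the convention that arities are >= 1. *)
Definition Op : Type := { n : nat & ('I_n.+1 -> X) -> X }.

Definition arity (f : Op) : nat := (projT1 f).+1.

Definition proj_op (n : nat) (k : 'I_n.+1) : Op :=
  existT (fun m => ('I_m.+1 -> X) -> X) n (fun x => x k).

Definition comp_op (n m : nat) (f : ('I_n.+1 -> X) -> X)
    (g : 'I_n.+1 -> ('I_m.+1 -> X) -> X) : Op :=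
  existT (fun k => ('I_k.+1 -> X) -> X) m (fun x => f (fun i => g i x)).

Definition is_clone (C : Op -> Prop) : Prop :=
  (forall (n : nat) (k : 'I_n.+1), C (proj_op k)) /\
  (forall (n m : nat) (f : ('I_n.+1 -> X) -> X)
          (g : 'I_n.+1 -> ('I_m.+1 -> X) -> X),
      C (existT _ n f) ->
      (forall i, C (existT (fun k => ('I_k.+1 -> X) -> X) m (g i))) ->
      C (comp_op f g)).

Definition line_card_le (Y : subset) (n k : nat) : Prop :=
  forall l : list nat, NoDup l -> (forall a, In a l -> Y (a, n)) ->
    (length l <= k)%coq_nat.

Definition idealI (Y : subset) : Prop :=
  exists k : nat, forall n : nat, line_card_le Y n k.

Definition idealJ (Y : subset) : Prop :=
  forall n : nat, exists l : list nat, forall a, Y (a, n) -> In a l.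

Definition image_pow (f : Op) (A : subset) : subset :=
  fun y => exists x : 'I_(projT1 f).+1 -> X,
      (forall i, A (x i)) /\ projT2 f x = y.

Definition cloneOf (K : subset -> Prop) (f : Op) : Prop :=
  forall A : subset, K A -> K (image_pow f A).

(* Main.v *)
Require Import Defs.
From Stdlib Require Import Arith List Classical ClassicalEpsilon FunctionalExtensionality Lia FinFun.
From mathcomp Require Import all_boot.
Set Implicit Arguments. Unset Strict Implicit. Unset Printing Implicit Defensive.

Definition Bnd {T} (P : T -> Prop) (N : nat) :=
  exists s : list T, (length s <= N)%coq_nat /\ forall y, P y -> In y s.
Definition Fin {T} (P : T -> Prop) := exists s : list T, forall y, P y -> In y s.

Lemma Bnd_Fin T (P : T -> Prop) N : Bnd P N -> Fin P.
Proof. by case=> s [_ H]; exists s. Qed.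

Lemma Bnd_mono T (P : T -> Prop) N M : (N <= M)%coq_nat -> Bnd P N -> Bnd P M.
Proof. move=> h [s [h1 h2]]; exists s; split=> //; lia. Qed.

Lemma Bnd_sub T (P Q : T -> Prop) N : (forall y, Q y -> P y) -> Bnd P N -> Bnd Q N.
Proof. move=> h [s [h1 h2]]; exists s; split=> // y /h; apply: h2. Qed.

Lemma Fin_sub T (P Q : T -> Prop) : (forall y, Q y -> P y) -> Fin P -> Fin Q.
Proof. move=> h [s h2]; exists s=> y /h; apply: h2. Qed.

Lemma Bnd_map T U (P : T -> Prop) (Q : U -> Prop) (f : T -> U) N :
  Bnd P N -> (forall y, Q y -> exists z, P z /\ y = f z) -> Bnd Q N.
Proof.
move=> [s [h1 h2]] h; exists (List.map f s); rewrite length_map; split=> // y /h [z [/h2 hz ->]].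
by apply: in_map.
Qed.

Lemma Fin_map T U (P : T -> Prop) (Q : U -> Prop) (f : T -> U) :
  Fin P -> (forall y, Q y -> exists z, P z /\ y = f z) -> Fin Q.
Proof.
move=> [s h2] h; exists (List.map f s)=> y /h [z [/h2 hz ->]].
by apply: in_map.
Qed.

Lemma Bnd_bind T U (P : T -> Prop) (Q : T -> U -> Prop) N M :
  Bnd P N -> (forall z, P z -> Bnd (Q z) M) ->
  Bnd (fun y => exists z, P z /\ Q z y) (N * M).
Proof.
move=> [s [h1 h2]] hQ.
have aux : forall s : list T, exists l : list U, (length l <= length s * M)%coq_nat /\
    forall y z, In z s -> P z -> Q z y -> In y l.
  elim=> [|a s' [l [hl1 hl2]]]; first by exists nil; split=> //=; lia.
  case: (classic (P a)) => Pa.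
    case: (hQ a Pa) => la [hla1 hla2].
    exists (la ++ l)%list; rewrite length_app; split.
      rewrite /= mulSn; rewrite -?multE -?plusE in hl1 hla1 *; lia.
    move=> y z [<-|hz] Pz Qz; apply/in_app_iff; first by left; apply: hla2.
    by right; apply: (hl2 y z).
  exists l; split; first by rewrite /= mulSn; rewrite -?multE -?plusE in hl1 *; lia.
  move=> y z [<-|hz] Pz Qz //; by apply: (hl2 y z).
case: (aux s) => l [hl1 hl2]; exists l; split.
  apply: (Nat.le_trans _ _ _ hl1); apply: Nat.mul_le_mono_r; exact: h1.
by move=> y [z [Pz Qz]]; apply: (hl2 y z) => //; apply: h2.
Qed.

Lemma Fin_bind T U (P : T -> Prop) (Q : T -> U -> Prop) :
  Fin P -> (forall z, P z -> Fin (Q z)) ->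
  Fin (fun y => exists z, P z /\ Q z y).
Proof.
move=> [s h2] hQ.
have aux : forall s : list T, exists l : list U,
    forall y z, In z s -> P z -> Q z y -> In y l.
  elim=> [|a s' [l hl2]]; first by exists nil.
  case: (classic (P a)) => Pa.
    case: (hQ a Pa) => la hla2.
    exists (la ++ l)%list.
    move=> y z [<-|hz] Pz Qz; apply/in_app_iff; first by left; apply: hla2.
    by right; apply: (hl2 y z).
  exists l; move=> y z [<-|hz] Pz Qz //; by apply: (hl2 y z).
case: (aux s) => l hl2; exists l.
by move=> y [z [Pz Qz]]; apply: (hl2 y z) => //; apply: h2.
Qed.

Lemma Bnd_one T (a : T) : Bnd (fun y => y = a) 1.
Proof. exists (a :: nil); split=> /=; [lia| by move=> y ->; left]. Qed.

Lemma Bnd_union T (P Q : T -> Prop) N M : Bnd P N -> Bnd Q M ->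
  Bnd (fun y => P y \/ Q y) (N + M).
Proof.
move=> [s [h1 h2]] [s' [h1' h2']]; exists (s ++ s')%list; rewrite length_app.
split; first by rewrite -plusE; lia.
by move=> y [/h2|/h2'] H; apply/in_app_iff; [left|right].
Qed.

Lemma Fin_union T (P Q : T -> Prop) : Fin P -> Fin Q -> Fin (fun y => P y \/ Q y).
Proof.
move=> [s h2] [s' h2']; exists (s ++ s')%list.
by move=> y [/h2|/h2'] H; apply/in_app_iff; [left|right].
Qed.

Lemma InE (T : eqType) (x : T) s : In x s <-> x \in s.
Proof.
elim: s => [|a s IH] //=; rewrite in_cons; split.
  by case=> [->|/IH ->]; rewrite ?eqxx ?orbT.
by case/orP=> [/eqP ->|/IH]; [left|right].
Qed.

Lemma Fin_seq (T : eqType) (s : seq T) : Fin (fun y => y \in s).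
Proof. by exists s => y /InE. Qed.

Lemma Bnd_seq (T : eqType) (s : seq T) : Bnd (fun y => y \in s) (size s).
Proof.
exists s; split; last by move=> y /InE.
by elim: s => //= a s IH; lia.
Qed.

Lemma card_Bnd (Y : X -> Prop) n t : line_card_le Y n t <-> Bnd (fun a => Y (a, n)) t.
Proof.
split; last first.
  move=> [s [h1 h2]] l nd hl.
  apply: (Nat.le_trans _ _ _ _ h1); apply: NoDup_incl_length => // a /hl; apply: h2.
move=> H.
case: (classic (exists l, NoDup l /\ (forall a, In a l -> Y (a, n)) /\
                          forall a, Y (a, n) -> In a l)).
  move=> [l [nd [hl1 hl2]]]; exists l; split=> //; by apply: H.
move=> Hn; exfalso.
have: forall j, exists l, NoDup l /\ (forall a, In a l -> Y (a, n)) /\ length l = j.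
  elim=> [|j [l [nd [hl1 hl2]]]]; first by exists nil; split=> //; constructor.
  have [a [Ya na]] : exists a, Y (a, n) /\ ~ In a l.
    apply: NNPP => Hc; apply: Hn; exists l; split=> //; split=> // a Ya.
    by apply: NNPP => na; apply: Hc; exists a.
  exists (a :: l); split; first by constructor.
  split; last by rewrite /= hl2.
  by move=> b [<-|/hl1].
move/(_ t.+1) => [l [nd [hl1 hl2]]].
have := H l nd hl1; rewrite hl2; lia.
Qed.

Lemma idealI_Bnd A : idealI A <-> exists t, forall n, Bnd (fun a => A (a, n)) t.
Proof.
split=> [[t Ht]|[t Ht]]; exists t => n; apply/card_Bnd; by [apply: Ht|apply: Ht].
Qed.

Lemma idealI_J A : idealI A -> idealJ A.
Proof. move=> /idealI_Bnd [t Ht] n; apply: (Bnd_Fin (Ht n)). Qed.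

Definition Kgood (K : (X -> Prop) -> Prop) :=
  (forall A B : X -> Prop, K A -> (forall y, B y -> A y) -> K B) /\
  (forall (k : nat) (A : 'I_k -> X -> Prop), (forall i, K (A i)) ->
      K (fun y => exists i, A i y)).

Lemma Kgood_I : Kgood idealI.
Proof.
split.
  move=> A B /idealI_Bnd [t Ht] hB; apply/idealI_Bnd; exists t => n.
  by apply: (Bnd_sub _ (Ht n)) => a /hB.
move=> k A HA.
have [t Ht] : exists t, forall i, forall n, Bnd (fun a => A i (a, n)) t.
  have : forall s : seq 'I_k, exists t, forall i, In i s -> forall n, Bnd (fun a => A i (a, n)) t.
    elim=> [|i s [t Ht]]; first by exists 0.
    case/idealI_Bnd: (HA i) => ti Hti.
    exists (maxn t ti) => j [<-|/Ht Hj] n.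
      by apply: (Bnd_mono _ (Hti n)); apply/leP; rewrite leq_maxr.
    by apply: (Bnd_mono _ (Hj n)); apply/leP; rewrite leq_maxl.
  case/(_ (enum 'I_k)) => t Ht; exists t => i; apply: Ht; apply/InE; by rewrite mem_enum.
apply/idealI_Bnd; exists (size (enum 'I_k) * t) => n.
have := Bnd_bind (Q := fun i a => A i (a, n)) (Bnd_seq (enum 'I_k)) (fun i _ => Ht i n).
apply: Bnd_sub => a [i Hi]; exists i; split=> //; by rewrite mem_enum.
Qed.

Lemma Kgood_J : Kgood idealJ.
Proof.
split.
  move=> A B HA hB n; by apply: (Fin_sub _ (HA n)) => a /hB.
move=> k A HA n.
have := Fin_bind (Q := fun i a => A i (a, n)) (Fin_seq (enum 'I_k)) (fun i _ => HA i n).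
apply: Fin_sub => a [i Hi]; exists i; split=> //; by rewrite mem_enum.
Qed.

Lemma clone_of K : Kgood K -> is_clone (cloneOf K).
Proof.
move=> [Kdown Kunion]; split.
  move=> n k A HA; apply: (Kdown A) => // y [x [Hx <-]]; exact: Hx.
move=> n m f g Hf Hg A HA.
pose U := fun y => exists i : 'I_n.+1, image_pow (existT (fun k => ('I_k.+1 -> X) -> X) m (g i)) A y.
have HU : K U by apply: Kunion => i; apply: Hg.
move: (Hf U HU) => HfU; apply: (Kdown _ _ HfU) => y [x [Hx <-]].
exists (fun i => g i x); split=> // i; exists i; exists x; split=> //.
Qed.

Definition f0fun (z : 'I_2 -> X) : X :=
  if (z ord_max).2 <= (z ord0).2 then ((z ord_max).1, (z ord0).2) else (0, 0).
Definition f0 : Op := existT (fun k => ('I_k.+1 -> X) -> X) 1 f0fun.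

Lemma f0_J : cloneOf idealJ f0.
Proof.
move=> A HA m.
have H1 := Fin_bind (Q := fun d a => A (a, d)) (Fin_seq (iota 0 m.+1)) (fun d _ => HA d).
have := Fin_union H1 (Bnd_Fin (Bnd_one 0)).
apply: Fin_sub => a [z [Hz]]; rewrite /= /f0fun.
case: ifP => hle [e1 e2].
  left; exists (z ord_max).2; split.
    have hh : (z ord_max).2 \in iota 0 m.+1 by rewrite mem_iota add0n ltnS -e2.
    exact: hh.
  rewrite -e1; by case: (z ord_max) (Hz ord_max).
by right.
Qed.

Lemma f0_notI : ~ cloneOf idealI f0.
Proof.
move=> H.
have HA : idealI (fun y : X => y.1 = y.2).
  apply/idealI_Bnd; exists 1 => n; apply: (Bnd_sub _ (Bnd_one n)) => a //.
case: (H _ HA) => t Ht.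
have := Ht t (List.seq 0 t.+1) (seq_NoDup _ _).
rewrite length_seq; (have: forall a, In a (List.seq 0 t.+1) -> image_pow f0 (fun y : X => y.1 = y.2) (a, t)); last by move=> h /(_ h); lia.
move=> a /in_seq [_ ha].
exists (fun i : 'I_2 => if i == ord0 then (t, t) else (a, a)); split.
  by move=> i; case: (i == ord0).
rewrite /= /f0fun /=.
have -> : a <= t by apply/leP; lia.
by [].
Qed.

Section Tree.
Variable n : nat.
Variable gf : ('I_n.+1 -> X) -> X.
Definition PT := 'I_n.+1 -> option X.
Definition ext (p : PT) (x : 'I_n.+1 -> X) := forall i y, p i = Some y -> x i = y.

Hypothesis HT : forall A : X -> Prop, idealI A ->
  idealJ (fun y => exists x, (forall i, A (x i)) /\ gf x = y).

Section OneP.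
Variables (m : nat) (p : PT).
Hypothesis Hc : forall (F : seq nat) (V : seq X), exists x, ext p x /\ (gf x).2 = m /\
   (forall i, p i = None -> (x i).2 \notin F) /\ gf x \notin V.

Let inh : inhabited ('I_n.+1 -> X) := inhabits (fun _ => (0, 0)).
Let ch (F : seq nat) (V : seq X) := epsilon inh (fun x => ext p x /\ (gf x).2 = m /\
   (forall i, p i = None -> (x i).2 \notin F) /\ gf x \notin V).
Let chP (F : seq nat) (V : seq X) : ext p (ch F V) /\ (gf (ch F V)).2 = m /\
   (forall i, p i = None -> ((ch F V) i).2 \notin F) /\ gf (ch F V) \notin V.
Proof. exact: (epsilon_spec inh _ (Hc F V)). Qed.

Let pl : seq nat := [seq (odflt (0,0) (p i)).2 | i <- enum 'I_n.+1].
Let lx (x : 'I_n.+1 -> X) : seq nat := [seq (x i).2 | i <- enum 'I_n.+1].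

Fixpoint st (j : nat) : seq nat * seq X :=
  match j with
  | 0 => (pl, [::])
  | j'.+1 => let x := ch (st j').1 (st j').2 in ((st j').1 ++ lx x, gf x :: (st j').2)
  end.
Let xj j := ch (st j).1 (st j).2.

Let st_mono j d : {subset (st j).1 <= (st (j + d)).1} /\ {subset (st j).2 <= (st (j + d)).2}.
Proof.
elim: d => [|d [IH1 IH2]]; first by rewrite addn0; split.
rewrite addnS /=; split=> y hy.
  by rewrite mem_cat IH1.
by rewrite in_cons IH2 ?orbT.
Qed.

Let st_after j j' : j < j' -> gf (xj j) \in (st j').2 /\ forall i, (xj j i).2 \in (st j').1.
Proof.
move=> hjj; have -> : j' = j.+1 + (j' - j.+1) by rewrite subnKC.
case: (st_mono j.+1 (j' - j.+1)) => h1 h2; split.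
  by apply: h2; rewrite /= in_cons eqxx.
move=> i; apply: h1; rewrite /= mem_cat; apply/orP; right.
by apply: (map_f (fun i => (xj j i).2)); rewrite mem_enum.
Qed.

Let pl_sub j : {subset pl <= (st j).1}.
Proof. by move=> y hy; case: (st_mono 0 j) => h1 _; apply: h1. Qed.

Let uniq_j j j' i i' : p i = None -> p i' = None -> (xj j i).2 = (xj j' i').2 -> j = j'.
Proof.
move=> hi hi' e.
case: (ltngtP j j') => // hjj.
  case: (st_after hjj) => _ /(_ i); rewrite e => hin.
  case: (chP (st j').1 (st j').2) => _ [_ [/(_ i' hi') hn _]].
  by rewrite hin in hn.
case: (st_after hjj) => _ /(_ i'); rewrite -e => hin.
case: (chP (st j).1 (st j).2) => _ [_ [/(_ i hi) hn _]].
by rewrite hin in hn.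
Qed.

Let Aset (y : X) := (exists i, p i = Some y) \/ exists j i, xj j i = y.

Let Aset_I : idealI Aset.
Proof.
apply/idealI_Bnd; exists (n.+1 + n.+1) => l.
have B1 : Bnd (fun a => exists i, p i = Some (a, l)) n.+1.
  have := Bnd_seq (enum 'I_n.+1); rewrite size_enum_ord => hb.
  apply: (Bnd_map (f := fun i => (odflt (0,0) (p i)).1) hb) => a [i hi].
  by exists i; rewrite mem_enum hi.
case: (classic (exists j0 i0, p i0 = None /\ (xj j0 i0).2 = l)) => [[j0 [i0 [h0 e0]]]|hno].
  have B2 : Bnd (fun a => exists i, (xj j0 i).1 = a) n.+1.
    have := Bnd_seq (enum 'I_n.+1); rewrite size_enum_ord => hb.
    apply: (Bnd_map (f := fun i => (xj j0 i).1) hb) => a [i hi].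
    by exists i; rewrite mem_enum hi.
  apply: (Bnd_sub _ (Bnd_union B1 B2)) => a [[i hi]|[j [i hi]]]; first by left; exists i.
  case hpi: (p i) => [y|].
    left; exists i; rewrite hpi; congr Some.
    by case: (chP (st j).1 (st j).2) => /(_ i y hpi) <- _.
  right; exists i.
  have ej : j = j0 by apply: (uniq_j hpi h0); rewrite hi e0.
  by rewrite -ej hi.
apply: (Bnd_mono (N := n.+1)); first by rewrite -plusE; lia.
apply: (Bnd_sub _ B1).
move=> a [[i hi]|[j [i hi]]]; first by exists i.
case hpi: (p i) => [y|].
  exists i; rewrite hpi; congr Some.
  by case: (chP (st j).1 (st j).2) => /(_ i y hpi) <- _.
by exfalso; apply: hno; exists j, i; rewrite hi.
Qed.

Lemma tree_contra : False.
Proof.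
case: (HT Aset_I m) => l hl.
pose a j := (gf (xj j)).1.
have inj : Injective a.
  move=> j j' e.
  have Hm : forall j, (gf (xj j)).2 = m by move=> j0; case: (chP (st j0).1 (st j0).2) => _ [].
  have eg : gf (xj j) = gf (xj j').
    by move: (Hm j) (Hm j') e; rewrite /a; case: (gf (xj j)) => ? ?; case: (gf (xj j')) => ? ? /= -> -> ->.
  case: (ltngtP j j') => // hjj.
    case: (st_after hjj) => hin _.
    case: (chP (st j').1 (st j').2) => _ [_ [_ hn]].
    by rewrite -/(xj j') -eg hin in hn.
  case: (st_after hjj) => hin _.
  case: (chP (st j).1 (st j).2) => _ [_ [_ hn]].
  by rewrite -/(xj j) eg hin in hn.
have nd := Injective_map_NoDup inj (seq_NoDup (length l).+1 0).
have := NoDup_incl_length nd.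
rewrite length_map length_seq => H.
suff: (S (length l) <= length l)%coq_nat by lia.
apply: H => y /in_map_iff [j [<- _]].
apply: hl; exists (xj j); split; first by move=> i; right; exists j, i.
case: (chP (st j).1 (st j).2) => _ [e _].
rewrite /a; move: e; rewrite -/(xj j); by case: (gf (xj j)) => ? ? /= ->.
Qed.
End OneP.

Lemma tree (m : nat) (p : PT) : exists (F : seq nat) (V : seq X), forall x, ext p x ->
  (gf x).2 = m -> (forall i, p i = None -> (x i).2 \notin F) -> gf x \in V.
Proof.
apply: NNPP => Hn; apply: (@tree_contra m p) => F V.
apply: NNPP => H; apply: Hn; exists F, V => x e1 e2 e3.
apply/negPn/negP => nv; apply: H; exists x; split=> //.
Qed.
End Tree.

Section Path.
Variable n : nat.
Variable gf : ('I_n.+1 -> X) -> X.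
Variable Fl : nat -> PT n -> seq nat.
Variable Vl : nat -> PT n -> seq X.
Hypothesis TreeP : forall m p x, ext p x -> (gf x).2 = m ->
  (forall i, p i = None -> (x i).2 \notin Fl m p) -> gf x \in Vl m p.

Definition opt m (p : PT n) (x : 'I_n.+1 -> X) : option ('I_n.+1 * nat) :=
  if [pick i | (p i == None) && ((x i).2 \in Fl m p)] is Some i then Some (i, (x i).2) else None.
Definition upd (p : PT n) i y : PT n := fun j => if j == i then Some y else p j.
Definition stepG (p : PT n) (o : option ('I_n.+1 * nat)) (oy : option X) : PT n :=
  match o, oy with Some (i, _), Some y => upd p i y | _, _ => p end.
Definition optpt (o : option ('I_n.+1 * nat)) (x : 'I_n.+1 -> X) : option X :=
  if o is Some (i, _) then Some (x i) else None.
Definition stepP m p x := stepG p (opt m p x) (optpt (opt m p x) x).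
Definition pst m j x := iter j (fun p => stepP m p x) (fun _ => None).
Definition Opts m p : seq (option ('I_n.+1 * nat)) :=
  None :: [seq Some (i, l) | i <- enum 'I_n.+1, l <- Fl m p].

Lemma optSome m p x i l : opt m p x = Some (i, l) ->
  p i = None /\ l = (x i).2 /\ l \in Fl m p.
Proof.
rewrite /opt; case: pickP => // i0 /andP [/eqP h1 h2] [<- <-]; by [].
Qed.

Lemma optNone m p x : opt m p x = None -> forall i, p i = None -> (x i).2 \notin Fl m p.
Proof.
rewrite /opt; case: pickP => // H _ i hi; move: (H i); rewrite hi eqxx /=; by move=> ->.
Qed.

Lemma opt_in m p x : opt m p x \in Opts m p.
Proof.
case e: (opt m p x) => [[i l]|]; last by rewrite in_cons eqxx.
case: (optSome e) => _ [_ hl]; rewrite in_cons; apply/orP; right.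
apply: (allpairs_f (fun i l => Some (i, l))) => //; by rewrite mem_enum.
Qed.

Lemma ext_pst m j x : ext (pst m j x) x.
Proof.
elim: j => [|j IH] //= i y; rewrite /stepP.
case e: (opt m (pst m j x) x) => [[i0 l]|] /=; last by apply: IH.
rewrite /upd; case: eqP => [-> [<-]|_] //; by apply: IH.
Qed.

Definition nNone (p : PT n) := #|[pred i | p i == None]|.

Lemma nNone_upd p i y : p i = None -> nNone (upd p i y) < nNone p.
Proof.
move=> hi; rewrite /nNone.
have -> : #|[pred j | p j == None]| = 1 + #|[predD1 [pred j | p j == None] & i]|.
  by rewrite (cardD1 i) inE hi eqxx.
rewrite add1n ltnS; apply: eq_leq; apply: eq_card => j; rewrite !inE /upd.
by case: (j == i).
Qed.

Lemma stable_from m j x : opt m (pst m j x) x = None -> forall d, pst m (j + d) x = pst m j x.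
Proof.
move=> h; elim=> [|d IH]; first by rewrite addn0.
by rewrite addnS /= IH /stepP h.
Qed.

Lemma fuel m x f : forall j, nNone (pst m j x) <= f -> opt m (pst m (j + f) x) x = None.
Proof.
elim: f => [|f IH] j hj.
  rewrite addn0; case e: (opt m (pst m j x) x) => [[i l]|] //.
  case: (optSome e) => hi _.
  have := card0_eq (A := [pred i | pst m j x i == None]); rewrite /nNone in hj.
  move/(_ _ i); rewrite !inE hi eqxx; move: hj; rewrite leqn0 => /eqP h; by move/(_ h).
case e: (opt m (pst m j x) x) => [[i l]|]; last by rewrite (stable_from e).
rewrite -addSnnS; apply: IH.
have : pst m j.+1 x = upd (pst m j x) i (x i) by rewrite /= /stepP e.
move=> ->; case: (optSome e) => hi _.
have h := nNone_upd (x i) hi; rewrite -ltnS; exact: (leq_trans h hj).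
Qed.

Lemma stable m x : opt m (pst m n.+1 x) x = None.
Proof.
have := @fuel m x n.+1 0; rewrite add0n; apply.
rewrite /nNone; have := max_card [pred i | pst m 0 x i == None]; by rewrite card_ord.
Qed.

Lemma final_in m x : (gf x).2 = m -> gf x \in Vl m (pst m n.+1 x).
Proof.
move=> hm; apply: TreeP => //; first by apply: ext_pst.
by apply: optNone; apply: stable.
Qed.

Lemma tree_J : forall A : X -> Prop, idealJ A ->
  idealJ (fun y => exists x, (forall i, A (x i)) /\ gf x = y).
Proof.
move=> A HA m.
pose R j p := exists x, (forall i, A (x i)) /\ (gf x).2 = m /\ pst m j x = p.
have HR : forall j, Fin (R j).
  elim=> [|j IH].
    apply: (Bnd_Fin (N := 1)); apply: (Bnd_sub _ (Bnd_one (fun _ => None))) => p [x [_ [_ <-]]] //.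
  pose OY (o : option ('I_n.+1 * nat)) oy := oy = None \/ exists y, oy = Some y /\ A y /\
                 y.2 = (if o is Some (_, l) then l else 0).
  have HOY : forall o, Fin (OY o).
    move=> o; apply: Fin_union; first by apply: (Bnd_Fin (Bnd_one None)).
    pose L := (if o is Some (_, l) then l else 0).
    apply: (Fin_map (f := fun a => Some (a, L)) (HA L)).
    move=> oy [y [-> [Ay ey]]]; exists y.1; rewrite /L -ey -surjective_pairing; by split.
  have HQ : forall p, Fin (fun p' => exists o, o \in Opts m p /\ exists oy, OY o oy /\ p' = stepG p o oy).
    move=> p; have := Fin_bind (Fin_seq (Opts m p)) (fun o _ => Fin_bind (HOY o) (fun oy _ => Bnd_Fin (Bnd_one (stepG p o oy)))).
    apply: Fin_sub => p' [o [ho [oy [hoy e]]]]; exists o; split=> //; exists oy; split=> //.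
  have := Fin_bind IH (fun p _ => HQ p).
  apply: Fin_sub => p' [x [hx [hm <-]]].
  exists (pst m j x); split; first by exists x.
  exists (opt m (pst m j x) x); split; first by apply: opt_in.
  exists (optpt (opt m (pst m j x) x) x); split; last by [].
  case e: (opt m (pst m j x) x) => [[i l]|]; last by left.
  right; exists (x i); split=> //; split=> //; by case: (optSome e) => _ [-> _].
have := Fin_bind (HR n.+1) (fun p _ => Fin_map (f := fst) (Fin_seq (Vl m p)) (fun a h => h)).
move=> H.
have : Fin (fun a => exists p, R n.+1 p /\ (a, m) \in Vl m p).
  have := Fin_bind (HR n.+1) (fun p _ => Fin_map (P := fun y => y \in Vl m p) (Q := fun a => (a, m) \in Vl m p) (f := fst) (Fin_seq (Vl m p)) (fun a h => ex_intro _ (a, m) (conj h erefl))).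
  by [].
apply: Fin_sub => a [x [hx e]].
exists (pst m n.+1 x); split; first by exists x; rewrite e.
rewrite -e; apply: final_in; by rewrite e.
Qed.
End Path.

Definition HTprop n (gf : ('I_n.+1 -> X) -> X) := forall A : X -> Prop, idealI A ->
  idealJ (fun y => exists x, (forall i, A (x i)) /\ gf x = y).

Lemma tree_fun (n : nat) (gf : ('I_n.+1 -> X) -> X) : HTprop gf -> exists (Fl : nat -> PT n -> seq nat) (Vl : nat -> PT n -> seq X),
  forall m p x, ext p x -> (gf x).2 = m ->
  (forall i, p i = None -> (x i).2 \notin Fl m p) -> gf x \in Vl m p.
Proof.
move=> HT.
have H := tree HT.
pose Fl m p := epsilon (inhabits [::]) (fun F => exists V : seq X, forall x, ext p x ->
  (gf x).2 = m -> (forall i, p i = None -> (x i).2 \notin F) -> gf x \in V).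
have HF : forall m p, exists V : seq X, forall x, ext p x ->
  (gf x).2 = m -> (forall i, p i = None -> (x i).2 \notin Fl m p) -> gf x \in V.
  move=> m p; exact: (epsilon_spec (inhabits [::]) _ (H m p)).
pose Vl m p := epsilon (inhabits [::]) (fun V : seq X => forall x, ext p x ->
  (gf x).2 = m -> (forall i, p i = None -> (x i).2 \notin Fl m p) -> gf x \in V).
exists Fl, Vl => m p; exact: (epsilon_spec (inhabits [::]) _ (HF m p)).
Qed.

Lemma HT_J (n : nat) (gf : ('I_n.+1 -> X) -> X) : HTprop gf -> forall A : X -> Prop, idealJ A ->
  idealJ (fun y => exists x, (forall i, A (x i)) /\ gf x = y).
Proof.
move=> /tree_fun [Fl [Vl H]]; exact: (tree_J H).
Qed.

Lemma CI_CJ f : cloneOf idealI f -> cloneOf idealJ f.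
Proof.
case: f => n gf Hf; apply: (@HT_J n gf) => A HA; apply: idealI_J; exact: (Hf A HA).
Qed.

Lemma size_length T (s : seq T) : size s = length s.
Proof. by elim: s => //= a s ->. Qed.

Lemma NoDup_uniq (T : eqType) (s : seq T) : NoDup s -> uniq s.
Proof.
elim: s => //= a s IH /NoDup_cons_iff [na nd]; rewrite IH // andbT.
by apply/negP => /InE.
Qed.

Section Decomp.
Variable D : Op -> Prop.
Hypothesis HD : is_clone D.
Hypothesis HI : forall f, cloneOf idealI f -> D f.
Variable Bset : X -> Prop.
Hypothesis hB1 : forall N, exists bl : nat * seq nat,
  uniq bl.2 /\ N < size bl.2 /\ forall a, a \in bl.2 -> Bset (a, bl.1).
Hypothesis hB2 : forall r (h : ('I_r.+1 -> X) -> X), (forall y, Bset (h y)) ->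
  D (existT (fun k => ('I_k.+1 -> X) -> X) r h).

Definition bl N := epsilon (inhabits (0, [::])) (fun bl : nat * seq nat =>
  uniq bl.2 /\ N < size bl.2 /\ forall a, a \in bl.2 -> Bset (a, bl.1)).
Lemma blP N : uniq (bl N).2 /\ N < size (bl N).2 /\ forall a, a \in (bl N).2 -> Bset (a, (bl N).1).
Proof. exact: (epsilon_spec _ _ (hB1 N)). Qed.

Definition kappa N e : X := (nth 0 (bl N).2 e, (bl N).1).

Lemma kappaB N e : e < N -> Bset (kappa N e).
Proof.
move=> he; case: (blP N) => _ [hs hb]; apply: hb; apply: mem_nth.
exact: (ltn_trans he hs).
Qed.

Lemma kappa_dec N e : e < N -> index (kappa N e).1 (bl N).2 = e.
Proof.
move=> he; case: (blP N) => hu [hs _]; apply: index_uniq => //.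
exact: (ltn_trans he hs).
Qed.

Section G.
Variable n : nat.
Variable gf : ('I_n.+1 -> X) -> X.
Variable Fl : nat -> PT n -> seq nat.
Variable Vl : nat -> PT n -> seq X.
Hypothesis TreeP : forall m p x, ext p x -> (gf x).2 = m ->
  (forall i, p i = None -> (x i).2 \notin Fl m p) -> gf x \in Vl m p.

Definition codeS m j x := let p := pst Fl m j x in
  kappa (size (Opts Fl m p)) (index (opt Fl m p x) (Opts Fl m p)).
Definition codeF m x := let p := pst Fl m n.+1 x in
  kappa (size (Vl m p)) (index (gf x) (Vl m p)).
Definition cd j x := codeS (gf x).2 j x.
Definition cF x := codeF (gf x).2 x.

Definition nw := n.+1 + n.+1.
Definition xof (z : 'I_nw.+1 -> X) : 'I_n.+1 -> X := fun i => z (inord i).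
Definition wf (z : 'I_nw.+1 -> X) : X :=
  if [forall j : 'I_n.+1, z (inord (n.+1 + j)) == cd j (xof z)] && (z (inord nw) == cF (xof z))
  then gf (xof z) else z ord0.
Definition args (i : 'I_nw.+1) : ('I_n.+1 -> X) -> X := fun y =>
  if i < n.+1 then y (inord i) else if i < nw then cd (i - n.+1) y else cF y.

Lemma comp_eq : comp_op wf args = existT (fun k => ('I_k.+1 -> X) -> X) n gf.
Proof.
rewrite /comp_op; congr existT; apply: functional_extensionality => y.
have ex : xof (fun i => args i y) = y.
  apply: functional_extensionality => i; rewrite /xof /args inordK ?ltn_ord ?inord_val //.
  by apply: (leq_trans (ltn_ord i)); rewrite /nw; apply: leqW; apply: leq_addr.
rewrite /wf ex.
have -> : [forall j : 'I_n.+1, args (inord (n.+1 + j)) y == cd j y].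
  apply/forallP => j; rewrite /args inordK; last by rewrite /nw ltnS leq_add2l; apply: ltnW.
  rewrite ltnNge leq_addr /= /nw ltn_add2l ltn_ord addKn; by [].
rewrite /args inordK // /nw ltnn ltnNge leq_addr /= eqxx; by [].
Qed.

Section Count.
Variable A' : X -> Prop.
Variable t : nat.
Hypothesis Ht : forall l, Bnd (fun a => A' (a, l)) t.

Definition cc := t * (1 + t).
Definition RR m j p := exists x, (forall i, A' (x i)) /\ (gf x).2 = m /\
  (forall j', j' < j -> A' (codeS m j' x)) /\ pst Fl m j x = p.

Lemma R_bnd m j : Bnd (RR m j) (cc ^ j).
Proof.
elim: j => [|j IH].
  rewrite expn0; apply: (Bnd_sub _ (Bnd_one (fun _ => None))) => p [x [_ [_ [_ <-]]]] //.
pose Dec (p : PT n) o := exists a, A' (a, (bl (size (Opts Fl m p))).1) /\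
   o = nth None (Opts Fl m p) (index a (bl (size (Opts Fl m p))).2).
pose L (o : option ('I_n.+1 * nat)) := if o is Some (_, l) then l else 0.
pose OY o oy := oy = None \/ exists y, oy = Some y /\ A' y /\ y.2 = L o.
have HDec : forall p, Bnd (Dec p) t.
  move=> p; apply: (Bnd_map (Ht _)) => o [a [ha ->]]; exists a; split; [exact: ha|reflexivity].
have HOY : forall o, Bnd (OY o) (1 + t).
  move=> o; apply: Bnd_union; first by apply: Bnd_one.
  apply: (Bnd_map (f := fun a => Some (a, L o)) (Ht (L o))).
  move=> oy [y [-> [Ay ey]]]; exists y.1; rewrite -ey -surjective_pairing; by split.
have HQ : forall p, Bnd (fun p' => exists o, Dec p o /\ exists oy, OY o oy /\ p' = stepG p o oy) cc.
  move=> p; have := Bnd_bind (HDec p) (fun o _ => Bnd_bind (HOY o) (fun oy _ => Bnd_one (stepG p o oy))).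
  rewrite muln1 => H; apply: (Bnd_sub _ H) => p' [o [ho [oy [hoy e]]]].
  exists o; split=> //; exists oy; split=> //.
have := Bnd_bind IH (fun p _ => HQ p); rewrite expnS mulnC => H.
apply: (Bnd_sub _ H) => p' [x [hx [hm [hc <-]]]].
exists (pst Fl m j x); split.
  exists x; split=> //; split=> //; split=> // j' hj'; apply: hc; exact: (ltn_trans hj').
have hin := opt_in Fl m (pst Fl m j x) x.
exists (opt Fl m (pst Fl m j x) x); split.
  pose e := index (opt Fl m (pst Fl m j x) x) (Opts Fl m (pst Fl m j x)).
  have he : e < size (Opts Fl m (pst Fl m j x)) by rewrite index_mem.
  exists (kappa (size (Opts Fl m (pst Fl m j x))) e).1; split.
    exact: (hc j (ltnSn j)).
  by rewrite kappa_dec // nth_index.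
exists (optpt (opt Fl m (pst Fl m j x) x) x); split; last by [].
case e: (opt Fl m (pst Fl m j x) x) => [[i l]|]; first last.
  by left.
right; exists (x i); split=> //; split=> //; by case: (optSome e) => _ [-> _].
Qed.

Definition GG m a := exists x, (forall i, A' (x i)) /\ gf x = (a, m) /\
  (forall j', j' < n.+1 -> A' (codeS m j' x)) /\ A' (codeF m x).

Lemma G_bnd m : Bnd (GG m) (cc ^ n.+1 * t).
Proof.
pose Fq (p : PT n) a := exists b, A' (b, (bl (size (Vl m p))).1) /\
   a = (nth (0,0) (Vl m p) (index b (bl (size (Vl m p))).2)).1.
have HF : forall p, Bnd (Fq p) t.
  move=> p; apply: (Bnd_map (Ht _)) => a [b [hb ->]]; exists b; split; [exact: hb|reflexivity].
have := Bnd_bind (R_bnd m n.+1) (fun p _ => HF p) => H.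
apply: (Bnd_sub _ H) => a [x [hx [hg [hc hF]]]].
have hm : (gf x).2 = m by rewrite hg.
exists (pst Fl m n.+1 x); split; first by exists x.
have hin := final_in TreeP hm.
pose e := index (gf x) (Vl m (pst Fl m n.+1 x)).
have he : e < size (Vl m (pst Fl m n.+1 x)) by rewrite index_mem.
exists (kappa (size (Vl m (pst Fl m n.+1 x))) e).1; split.
  exact: hF.
by rewrite kappa_dec // nth_index // hg.
Qed.
End Count.

Lemma w_I : cloneOf idealI (existT (fun k => ('I_k.+1 -> X) -> X) nw wf).
Proof.
move=> A' /idealI_Bnd [t Ht]; apply/idealI_Bnd; exists (t + cc t ^ n.+1 * t) => l.
apply: (Bnd_sub _ (Bnd_union (Ht l) (G_bnd Ht l))) => a [z [hz]].
rewrite /= /wf; case: ifP => [/andP [/forallP H1 /eqP H2]|_] e; last by left; rewrite -e.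
right; exists (xof z); split; first by move=> i; apply: hz.
split=> //; split.
  move=> j' hj'; have := H1 (Ordinal hj'); move/eqP => /= h.
  by rewrite /cd e /= in h; rewrite -h.
by rewrite /cF e /= in H2; rewrite -H2.
Qed.

Lemma D_g : D (existT (fun k => ('I_k.+1 -> X) -> X) n gf).
Proof.
rewrite -comp_eq; apply: (proj2 HD); first by apply: HI; apply: w_I.
move=> i; rewrite /args; case: (i < n.+1).
  exact: (proj1 HD n (inord i)).
case: (i < nw); apply: hB2 => y.
  rewrite /cd /codeS; apply: kappaB; rewrite index_mem; apply: opt_in.
rewrite /cF /codeF; apply: kappaB; rewrite index_mem; by apply: final_in.
Qed.
End G.
End Decomp.

Lemma cover D : is_clone D ->
     (forall f, cloneOf idealI f -> D f) ->
     (forall f, D f -> cloneOf idealJ f) ->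
     forall f, D f -> ~ cloneOf idealI f -> forall g, cloneOf idealJ g -> D g.
Proof.
move=> HD HI HJ [nf ff] Df nI [n gf] Hg.
have [A0 [HA0 nB]] : exists A0, idealI A0 /\ ~ idealI (image_pow (existT _ nf ff) A0).
  apply: NNPP => H; apply: nI => A HA; apply: NNPP => H2; apply: H; exists A; by split.
pose Bset := image_pow (existT (fun k => ('I_k.+1 -> X) -> X) nf ff) A0.
have hB1 : forall N, exists bl : nat * seq nat,
    uniq bl.2 /\ N < size bl.2 /\ forall a, a \in bl.2 -> Bset (a, bl.1).
  move=> N.
  have [b hb] : exists b, ~ line_card_le Bset b N.
    apply: NNPP => H; apply: nB; exists N => b; apply: NNPP => H2; apply: H; by exists b.
  have [l [nd [hl hlen]]] : exists l, NoDup l /\ (forall a, In a l -> Bset (a, b)) /\ ~ (length l <= N)%coq_nat.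
    apply: NNPP => H; apply: hb => l nd hl; apply: NNPP => H2; apply: H; exists l; by split.
  exists (b, l); split; first by apply: NoDup_uniq.
  split; first by rewrite /= size_length; apply/ltP; lia.
  by move=> a /InE /hl.
have hB2 : forall r (h : ('I_r.+1 -> X) -> X), (forall y, Bset (h y)) ->
    D (existT (fun k => ('I_k.+1 -> X) -> X) r h).
  move=> r h hh.
  pose pre (b : X) := epsilon (inhabits (fun _ : 'I_nf.+1 => (0, 0))) (fun x => (forall i, A0 (x i)) /\ ff x = b).
  have preP : forall y, (forall i, A0 (pre (h y) i)) /\ ff (pre (h y)) = h y.
    move=> y; exact: (epsilon_spec _ _ (hh y)).
  have -> : existT (fun k => ('I_k.+1 -> X) -> X) r h = comp_op ff (fun i y => pre (h y) i).
    rewrite /comp_op; congr existT; apply: functional_extensionality => y.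
    symmetry; exact: (proj2 (preP y)).
  apply: (proj2 HD); first exact: Df.
  move=> i; apply: HI => A _.
  apply: ((proj1 Kgood_I) A0) => // yy [x [_ <-]]; exact: (proj1 (preP x) i).
have HT : HTprop gf.
  move=> A HA; apply: Hg; exact: idealI_J.
case: (tree_fun HT) => Fl [Vl TreeP].
exact: (D_g HD HI hB1 hB2 TreeP).
Qed.

Theorem mainTheorem1 :
  is_clone (cloneOf idealI) /\ is_clone (cloneOf idealJ) /\
  (forall f, cloneOf idealI f -> cloneOf idealJ f) /\
  (exists f, cloneOf idealJ f /\ ~ cloneOf idealI f) /\
  (forall D : Op -> Prop, is_clone D ->
     (forall f, cloneOf idealI f -> D f) ->
     (forall f, D f -> cloneOf idealJ f) ->
     (forall f, D f <-> cloneOf idealI f) \/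
     (forall f, D f <-> cloneOf idealJ f)).
Proof.
split; first exact: clone_of Kgood_I.
split; first exact: clone_of Kgood_J.
split; first exact: CI_CJ.
split; first by exists f0; split; [exact: f0_J|exact: f0_notI].
move=> D HD HI HJ.
case: (classic (forall f, D f -> cloneOf idealI f)) => H.
  by left => f; split; [apply: H|apply: HI].
right => f; split; first by apply: HJ.
have [f1 [Df1 nI]] : exists f1, D f1 /\ ~ cloneOf idealI f1.
  apply: NNPP => H2; apply: H => f2 Df2; apply: NNPP => nf; apply: H2; exists f2; by split.
exact: (cover HD HI HJ Df1 nI).
Qed.
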